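(* Let $x\in S_n$ avoid $123$. Then $x$ avoids the bivincular pattern $132^{\star}$ if and only if $|C_{i,j}|\le 1$ for all cells $C_{i,j}$ of the grid decomposition of $x$.
   Context: An occurrence of $132^{\star}$ in $x$ is a pair of indices $a<b<n$ with $x_a<x_{b+1}$ and $x_b=x_{b+1}+1$. Let $m_1,\dots,m_k$ be the left-to-right minima of $x$ (entries smaller than every entry to their left), in order, and write $x=m_1B_1m_2B_2\cdots m_kB_k$, where $B_j$ is the (possibly empty) set of entries strictly between $m_j$ and $m_{j+1}$ in position ($B_k$: the entries after $m_k$). Set $m_0=+\infty$ and $H_i=\{y\in[n]: m_i<y<m_{i-1}\}$ for $1\le i\le k$. The cell $C_{i,j}$ is $H_i\cap B_j$, the set of entries of $B_j$ whose values lie in $H_i$. *)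

(* Defs.v *)
(* Permutations x in S_n are represented as x : 'S_n, i.e.
   bijections of 'I_n = {0,...,n-1}; positions and values are shifted by one
   relative to the paper ([n] = {1,...,n}), which is harmless since all notions
   below only use order comparisons and the "+1" difference of values. *)
From mathcomp Require Import all_boot all_order all_fingroup.
Set Implicit Arguments. Unset Strict Implicit. Unset Printing Implicit Defensive.

Definition avoids123 n (x : 'S_n) : Prop :=
  ~ exists i j k : 'I_n, [/\ i < j, j < k, x i < x j & x j < x k].

(* occurrence of the bivincular pattern 132^star: a < b < n (1-indexed),
   x_a < x_{b+1}, x_b = x_{b+1} + 1.  0-indexed: c = b+1 is a position. *)
Definition occ132star n (x : 'S_n) (a b : 'I_n) : Prop :=
  exists c : 'I_n, [/\ a < b, val c = (val b).+1, x a < x c &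
                       val (x b) = (val (x c)).+1].

Definition avoids132star n (x : 'S_n) : Prop :=
  forall a b : 'I_n, ~ occ132star x a b.

Definition is_lrmin n (x : 'S_n) (p : 'I_n) : bool :=
  [forall q : 'I_n, (q < p) ==> (x p < x q)].

Definition lrmin_pos n (x : 'S_n) : seq nat :=
  [seq val p | p <- enum 'I_n & is_lrmin x p].

Definition lrmin_val n (x : 'S_n) : seq nat :=
  [seq val (x p) | p <- enum 'I_n & is_lrmin x p].

Definition nb_lrmin n (x : 'S_n) : nat := size (lrmin_pos x).

(* B_j (j 0-indexed): positions strictly between m_j and m_{j+1}
   (for the last one: all positions after m_k) *)
Definition Bblock n (x : 'S_n) (j : nat) : {set 'I_n} :=
  [set r : 'I_n | (nth 0 (lrmin_pos x) j < r) &&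
     (r < (if j.+1 < nb_lrmin x then nth 0 (lrmin_pos x) j.+1 else n))].

(* H_i (i 0-indexed): positions whose value lies strictly between m_i and
   m_{i-1}, with m_{-1} = +infinity *)
Definition Hband n (x : 'S_n) (i : nat) : {set 'I_n} :=
  [set r : 'I_n | (nth 0 (lrmin_val x) i < x r) &&
     (if i is i'.+1 then val (x r) < nth 0 (lrmin_val x) i' else true)].

Definition cell n (x : 'S_n) (i j : nat) : {set 'I_n} :=
  Hband x i :&: Bblock x j.

(* Main.v *)
Require Import Defs.
From mathcomp Require Import all_boot all_order all_fingroup.
Set Implicit Arguments. Unset Strict Implicit. Unset Printing Implicit Defensive.

Lemma nth_lt_mono (s : seq nat) i k : sorted ltn s -> i < size s -> k < size s ->
  (nth 0 s i < nth 0 s k) = (i < k).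
Proof.
move=> ss hi hk; have H := sorted_ltn_nth ltn_trans 0 ss.
case: (ltngtP i k) => h.
- by apply: H.
- by apply/negbTE; rewrite -leqNgt ltnW //; apply: H.
- by rewrite h ltnn.
Qed.

Definition gtn' := fun a b : nat => b < a.
Lemma gtn'_trans : transitive gtn'.
Proof. by move=> y x z h1 h2; rewrite /gtn' in h1 h2 *; apply: ltn_trans h2 h1. Qed.

Lemma nth_gt_mono (s : seq nat) i k : sorted gtn' s -> i < size s -> k < size s ->
  (nth 0 s k < nth 0 s i) = (i < k).
Proof.
move=> ss hi hk; have H := sorted_ltn_nth gtn'_trans 0 ss.
case: (ltngtP i k) => h.
- by apply: (H i k).
- by apply/negbTE; rewrite -leqNgt ltnW //; apply: (H k i).
- by rewrite h ltnn.
Qed.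

Definition nxt (s : seq nat) j N := if j.+1 < size s then nth 0 s j.+1 else N.

Lemma block_ex (s : seq nat) N r : 0 < size s -> nth 0 s 0 < r -> r \notin s ->
  r.+1 \notin s -> r.+1 < N ->
  exists j, [/\ j < size s, nth 0 s j < r & r.+1 < nxt s j N].
Proof.
elim: s => [//|a t IH] _ /= ha.
rewrite !inE !negb_or => /andP[ra rt] /andP[r1a r1t] rN.
case: t IH rt r1t => [|b t'] IH rt r1t.
  by exists 0; rewrite /nxt /=.
case: (ltngtP r b) => hrb.
- exists 0; split => //; rewrite /nxt /=.
  by rewrite ltn_neqAle hrb andbT; move: r1t; rewrite inE negb_or eq_sym => /andP[].
- have [j [j1 j2 j3]] := IH isT hrb rt r1t rN.
  by exists j.+1; split.
- by move: rt; rewrite inE hrb eqxx.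
Qed.

Lemma band_ex (s : seq nat) v : has (fun y => y < v) s -> v \notin s -> v.+1 \notin s ->
  exists i, [/\ i < size s, nth 0 s i < v &
     (if i is i'.+1 then v.+1 < nth 0 s i' else true)].
Proof.
elim: s => [//|a t IH] /= hh.
rewrite !inE !negb_or => /andP[va vt] /andP[v1a v1t].
case: (ltngtP a v) => hav.
- by exists 0.
- have ht : has (fun y => y < v) t by move: hh; rewrite ltnNge (ltnW hav).
  have [i [i1 i2 i3]] := IH ht vt v1t.
  exists i.+1; split => //; case: i i1 i2 i3 => [|i'] //= _ _ _.
  by rewrite ltn_neqAle v1a hav.
- by move: va; rewrite hav eqxx.
Qed.

Lemma block_notin (s : seq nat) N j t : sorted ltn s -> j < size s ->
  nth 0 s j < t -> t < nxt s j N -> t \notin s.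
Proof.
move=> ss hj h1 h2; apply/negP => /(nthP 0) [k hk hkt].
move: h1; rewrite -hkt nth_lt_mono // => hjk.
move: h2; rewrite /nxt; case: ifP => hj1.
  by rewrite -hkt nth_lt_mono // ltnNge hjk.
by move=> _; move: hj1; rewrite (leq_ltn_trans hjk hk).
Qed.

Lemma band_notin (s : seq nat) i w : sorted gtn' s -> i < size s ->
  nth 0 s i < w -> (if i is i'.+1 then w < nth 0 s i' else true) -> w \notin s.
Proof.
move=> ss hi h1 h2; apply/negP => /(nthP 0) [k hk hkt].
move: h1; rewrite -hkt nth_gt_mono // => hik.
case: i hi hik h2 => [|i'] hi hik //.
rewrite -hkt nth_gt_mono ?(ltn_trans _ hi) //.
by rewrite ltnNge -ltnS hik.
Qed.
Section P.
Variables (n : nat) (x : 'S_n).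

Lemma mem_pos (t : 'I_n) : (val t \in lrmin_pos x) = is_lrmin x t.
Proof. by rewrite /lrmin_pos (mem_map val_inj) mem_filter mem_enum andbT. Qed.

Lemma mem_val (t : 'I_n) : (val (x t) \in lrmin_val x) = is_lrmin x t.
Proof.
have inj : injective (fun p : 'I_n => val (x p)).
  by move=> p q /val_inj /perm_inj.
by rewrite /lrmin_val (mem_map inj) mem_filter mem_enum andbT.
Qed.

Lemma sorted_pos : sorted ltn (lrmin_pos x).
Proof.
rewrite /lrmin_pos sorted_map; apply: sorted_filter.
  by move=> a b c; apply: ltn_trans.
by rewrite -sorted_map val_enum_ord iota_ltn_sorted.
Qed.

Lemma sorted_val : sorted gtn' (lrmin_val x).
Proof.
rewrite /lrmin_val sorted_map.
apply: (@sub_in_sorted _ (fun p => is_lrmin x p) (relpre val ltn)).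
- move=> p q hp hq /= hpq; rewrite /gtn'.
  by move/forallP: hq => /(_ p) /implyP; apply.
- by apply/allP => p; rewrite mem_filter => /andP[].
- apply: sorted_filter; first by move=> a b c; apply: ltn_trans.
  by rewrite -sorted_map val_enum_ord iota_ltn_sorted.
Qed.

Lemma nonmin_ex (t : 'I_n) : ~~ is_lrmin x t -> exists u : 'I_n, u < t /\ x u < x t.
Proof.
rewrite negb_forall => /existsP [u]; rewrite negb_imply -leqNgt => /andP[h1 h2].
exists u; split => //; rewrite ltn_neqAle h2 andbT.
by apply/negP => /eqP /val_inj /perm_inj E; move: h1; rewrite E ltnn.
Qed.

Lemma dec123 (t1 t2 : 'I_n) : avoids123 x -> ~~ is_lrmin x t1 -> t1 < t2 -> x t2 < x t1.
Proof.
move=> h nm h12; have [u [hu hxu]] := nonmin_ex nm.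
rewrite ltnNge leq_eqVlt; apply/negP => /orP[/eqP /val_inj /perm_inj E|lt].
  by move: h12; rewrite E ltnn.
by apply: h; exists u, t1, t2; split.
Qed.

Lemma head_pos : 0 < n -> 0 < size (lrmin_pos x) /\ nth 0 (lrmin_pos x) 0 = 0.
Proof.
move=> n0.
have h0 : 0 \in lrmin_pos x.
  have -> : 0 = val (Ordinal n0) by [].
  by rewrite mem_pos; apply/forallP => q; apply/implyP.
have := sorted_pos; case: (lrmin_pos x) h0 => [//|a t] /=.
rewrite inE => /orP; case=> [/eqP <- //|h1 hp].
by have := allP (order_path_min ltn_trans hp) _ h1.
Qed.

Lemma zero_val : 0 < n -> 0 \in lrmin_val x.
Proof.
move=> n0; set t := (x^-1)%g (Ordinal n0).
have xt : x t = Ordinal n0 by rewrite /t permKV.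
have -> : 0 = val (x t) by rewrite xt.
rewrite mem_val; apply/forallP => q; apply/implyP => hq.
rewrite xt /= lt0n; apply/negP => /eqP E.
have : x q = x t by apply: val_inj; rewrite xt; exact: E.
by move/perm_inj => E'; move: hq; rewrite E' ltnn.
Qed.

Lemma inB (t : 'I_n) j : (t \in Bblock x j) =
  (nth 0 (lrmin_pos x) j < t) && (t < nxt (lrmin_pos x) j n).
Proof. by rewrite inE. Qed.

Lemma inH (t : 'I_n) i : (t \in Hband x i) =
  (nth 0 (lrmin_val x) i < x t) &&
  (if i is i'.+1 then x t < nth 0 (lrmin_val x) i' else true).
Proof. by rewrite inE. Qed.

Lemma size_val : size (lrmin_val x) = nb_lrmin x.
Proof. by rewrite /lrmin_val /nb_lrmin /lrmin_pos !size_map. Qed.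

End P.
Theorem proposition3p21 (n : nat) (x : 'S_n) :
  avoids123 x ->
  (avoids132star x <->
   (forall i j : nat, i < nb_lrmin x -> j < nb_lrmin x -> #|cell x i j| <= 1)).
Proof.
move=> h123; split.
- move=> hav i j hi hj; rewrite leqNgt; apply/negP => /card_gt1P [p0 [q0 [hp0 hq0 hpq0]]].
  have [p [q [hp hq hpq]]] : exists p q, [/\ p \in cell x i j, q \in cell x i j & p < q].
    case: (ltngtP p0 q0) => h.
    + by exists p0, q0.
    + by exists q0, p0.
    + by move: hpq0; rewrite (val_inj h) eqxx.
  move: hp hq; rewrite !in_setI !inB !inH.
  move=> /andP[/andP[hp1 hp2] /andP[hp3 hp4]] /andP[/andP[hq1 hq2] /andP[hq3 hq4]].
  have hjs : j < size (lrmin_pos x) by [].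
  have his : i < size (lrmin_val x) by rewrite size_val.
  have nmpos : forall t : 'I_n, p <= t -> t <= q -> ~~ is_lrmin x t.
    move=> t h1 h2; rewrite -mem_pos.
    apply: (block_notin (N := n) (sorted_pos x) hjs).
    + exact: leq_trans hp3 h1.
    + exact: leq_ltn_trans h2 hq4.
  have xqp := dec123 h123 (nmpos p (leqnn _) (ltnW hpq)) hpq.
  have nmval : forall t : 'I_n, x q <= x t -> x t <= x p -> ~~ is_lrmin x t.
    move=> t h1 h2; rewrite -mem_val.
    apply: (band_notin (sorted_val x) his).
    + exact: leq_trans hq1 h1.
    + by move: hp2; case: (i) => [|i'] //= hp2; apply: leq_ltn_trans h2 hp2.
  have wn : (x q).+1 < n by apply: leq_ltn_trans xqp (ltn_ord (x p)).
  set t := (x^-1)%g (Ordinal wn).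
  have xt : val (x t) = (x q).+1 by rewrite /t permKV.
  have hq00 : 0 < val q by apply: leq_ltn_trans hpq.
  have bn : (val q).-1 < n by apply: leq_ltn_trans (leq_pred _) (ltn_ord q).
  set b : 'I_n := Ordinal bn.
  have hbq : (val b).+1 = val q by rewrite /= prednK.
  have hpb : p <= b by rewrite /= -ltnS prednK.
  have hbq' : b < q by rewrite -hbq.
  have nmb := nmpos b hpb (ltnW hbq').
  have nmq := nmpos q (ltnW hpq) (leqnn _).
  have nmt := nmval t ltac:(by rewrite xt) ltac:(by rewrite xt).
  have htq : t < q.
    case: (ltngtP t q) => // h.
    + have := dec123 h123 nmq h; rewrite xt ltnNge => /negP; case; exact: leqnSn.
    + by move: xt; rewrite (val_inj h) => /n_Sn.
  have htb : val t = val b.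
    apply/eqP; rewrite eqn_leq -ltnS hbq htq /=.
    rewrite leqNgt; apply/negP => h.
    have h1 := @dec123 _ x t b h123 nmt h; have h2 := dec123 h123 nmb hbq'.
    by move: h1; rewrite xt ltnS leqNgt h2.
  have xb : val (x b) = (x q).+1 by rewrite -xt (val_inj htb).
  have [u [hu hxu]] := nonmin_ex nmq.
  apply: (hav u b); exists q; split => //.
  rewrite ltn_neqAle -ltnS hbq hu andbT.
  apply/negP => /eqP /val_inj E; move: hxu; rewrite E xb ltnNge leqnSn.
  by [].
- move=> hcells a b [c [hab hc hac hbc]].
  have hbc' : b < c by rewrite hc.
  have nmc : ~~ is_lrmin x c.
    apply/negP => /forallP /(_ a) /implyP h.
    by move: (h (ltn_trans hab hbc')); rewrite ltnNge (ltnW hac).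
  have nmb : ~~ is_lrmin x b.
    apply/negP => /forallP /(_ a) /implyP /(_ hab).
    by rewrite hbc ltnNge ltnW // (ltn_trans hac).
  have n0 : 0 < n by apply: leq_ltn_trans (ltn_ord a).
  have [hs hs0] := head_pos x n0.
  have e1 : nth 0 (lrmin_pos x) 0 < b by rewrite hs0; apply: leq_ltn_trans hab.
  have e2 : val b \notin lrmin_pos x by rewrite mem_pos.
  have e3 : (val b).+1 \notin lrmin_pos x by rewrite -hc mem_pos.
  have e4 : (val b).+1 < n by rewrite -hc ltn_ord.
  have [j [hj hj1 hj2]] := block_ex hs e1 e2 e3 e4.
  have z0 := zero_val x n0.
  have f1 : has (fun y => y < x c) (lrmin_val x).
    apply/hasP; exists 0 => //; rewrite lt0n; apply/negP => /eqP E.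
    by move: nmc; rewrite -mem_val (_ : val (x c) = 0) ?z0 //; exact: E.
  have f2 : val (x c) \notin lrmin_val x by rewrite mem_val.
  have f3 : (val (x c)).+1 \notin lrmin_val x by rewrite -hbc mem_val.
  have [i [hi hi1 hi2]] := band_ex f1 f2 f3.
  have := hcells i j ltac:(by rewrite -size_val) hj.
  have hbc2 : nat_of_ord (x b) = (nat_of_ord (x c)).+1 := hbc.
  have hc2 : nat_of_ord c = (nat_of_ord b).+1 := hc.
  have sub : [set b; c] \subset cell x i j.
    apply/subsetP => t; rewrite in_set2 => /orP[] /eqP ->;
      rewrite in_setI inB inH; apply/and3P; split.
    + rewrite hbc2 (ltn_trans hi1 (ltnSn _)) /=.
      by case: (i) hi2.
    + exact: hj1.
    + exact: ltn_trans (ltnSn _) hj2.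
    + rewrite hi1 /=.
      by case: (i) hi2 => // i' h; apply: ltn_trans h.
    + by rewrite hc2; apply: ltn_trans hj1 _.
    + by rewrite hc2.
  have := subset_leq_card sub; rewrite cards2.
  have -> : b != c by apply/negP => /eqP E; move: hbc'; rewrite E ltnn.
  by move=> h1 h2; move: (leq_trans h1 h2).
Qed.
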